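(* Let $d\ge 2$ and $1\le r<d$. Let $h(x)=\mathrm{ReLU}(\Gamma^*W^*x+\beta^* )$ be a one-layer ReLU network, where $x\in\mathbb{R}^d$, $\Gamma^*\in\mathbb{R}^{d\times d}$ is diagonal, $\beta^*\in\mathbb{R}^d$, and $W^*\in\mathbb{R}^{d\times d}$ has rank $r$. Consider the four-layer network $$f(x)=\mathrm{ReLU}\Big(\Gamma_4W_4\,\mathrm{ReLU}\big(\Gamma_3W_3\,\mathrm{ReLU}(\Gamma_2W_2\,\mathrm{ReLU}(\Gamma_1W_1x+\beta_1)+\beta_2)+\beta_3\big)+\beta_4\Big),$$ with layer widths $d\to dr\to r\to dr\to d$. Concretely: - $W_1\in\mathbb{R}^{dr\times d}$, $W_2\in\mathbb{R}^{r\times dr}$, $W_3\in\mathbb{R}^{dr\times r}$, $W_4\in\mathbb{R}^{d\times dr}$ are random and frozen; - $\Gamma_1,\Gamma_2,\Gamma_3,\Gamma_4$ are diagonal of sizes $dr,r,dr,d$ respectively; - $\beta_1,\beta_2,\beta_3,\beta_4$ are vectors of the corresponding sizes; - the $\Gamma_i,\beta_i$ are tunable. Then, with probability $1$ over the draw of $W_1,\dots,W_4$, there exist $\Gamma_1,\dots,\Gamma_4,\beta_1,\dots,\beta_4$ such that $f(x)=h(x)$ for all $x\in\mathbb{R}^d$ with $\|x\|_2\le1$.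
   Context: $\mathrm{ReLU}(t)=\max(t,0)$ is applied entrywise. ''Random'' weight matrices have independent, identically distributed entries drawn from an arbitrary continuous and bounded distribution, independently across matrices. The diagonal matrices $\Gamma_i$ and vectors $\beta_i$ are the (tunable) scale and shift parameters of normalization layers. *)

(* Defs.v *)
From HB Require Import structures.
From mathcomp Require Import all_boot all_order all_algebra.
From mathcomp Require Import all_classical all_reals all_analysis.
Set Implicit Arguments. Unset Strict Implicit. Unset Printing Implicit Defensive.
Import Order.TTheory GRing.Theory Num.Theory.
Local Open Scope classical_set_scope.
Local Open Scope ring_scope.

Definition relu_vec (R : realType) (n : nat) (v : 'cV[R]_n) : 'cV[R]_n :=
  \col_i Num.max (v i 0) 0.

Definition nlayer (R : realType) (m n : nat) (g : 'rV[R]_m) (W : 'M[R]_(m, n))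
  (b : 'cV[R]_m) (x : 'cV[R]_n) : 'cV[R]_m :=
  relu_vec (diag_mx g *m W *m x + b).

Definition sqnorm (R : realType) (n : nat) (x : 'cV[R]_n) : R :=
  \sum_i (x i 0) ^+ 2.

(* index type of all entries of W1, W2, W3, W4 *)
Definition entry_idx (d r : nat) : finType :=
  ((('I_(d * r) * 'I_d) + ('I_r * 'I_(d * r))) +
   (('I_(d * r) * 'I_r) + ('I_d * 'I_(d * r))))%type.

Section Rand.
Context (R : realType) (d r : nat) (T : Type) (X : entry_idx d r -> T -> R).
Definition W1_of (w : T) : 'M[R]_(d * r, d) :=
  \matrix_(i, j) X (inl (inl (i, j))) w.
Definition W2_of (w : T) : 'M[R]_(r, d * r) :=
  \matrix_(i, j) X (inl (inr (i, j))) w.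
Definition W3_of (w : T) : 'M[R]_(d * r, r) :=
  \matrix_(i, j) X (inr (inl (i, j))) w.
Definition W4_of (w : T) : 'M[R]_(d, d * r) :=
  \matrix_(i, j) X (inr (inr (i, j))) w.
End Rand.

Definition mutually_independent (dm : measure_display) (Omega : measurableType dm)
  (R : realType) (P : probability Omega R) (I : finType) (X : I -> Omega -> R) :=
  forall B : I -> set R, (forall k, measurable (B k)) ->
    P (\bigcap_(k in [set: I]) (X k @^-1` B k)) = (\prod_(k : I) P (X k @^-1` B k))%E.

Definition has_law (dm : measure_display) (Omega : measurableType dm)
  (R : realType) (P : probability Omega R) (Y : Omega -> R)
  (mu : probability R R) :=
  forall B : set R, measurable B -> P (Y @^-1` B) = mu B.

Definition continuous_bounded_law (R : realType) (mu : probability R R) :=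
  mu `<< (@lebesgue_measure R) /\ exists M : R, mu [set` `[- M, M]%R] = 1%E.

(* Main.v *)
Require Import Defs.
From HB Require Import structures.
From mathcomp Require Import all_boot all_order all_algebra.
From mathcomp Require Import all_classical all_reals all_analysis.
From mathcomp Require Import perm.
From mathcomp Require Import ring lra.
Import Order.TTheory GRing.Theory Num.Theory.
Local Open Scope classical_set_scope.
Local Open Scope ring_scope.

Section S.
Context (R : realType) (mu : probability R R).

Fixpoint Tn (n : nat) : {d : measure_display & measurableType d} :=
  match n with
  | 0 => existT (fun d => measurableType d) _ R
  | S n => existT (fun d => measurableType d) _ (projT2 (Tn n) * R)%type
  end.
Definition T n := projT2 (Tn n).

Fixpoint lam (n : nat) : probability (T n) R :=
  match n return probability (T n) R with
  | 0 => (\d_(0:R) : probability R R)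
  | S n => ((lam n) \x mu)%E : probability (T n * R)%type R
  end.
End S.

Section Prob.
Context (R : realType) (mu : probability R R).
Context (Ix : finType) (k0 : Ix) (dm : measure_display) (Omega : measurableType dm)
  (P : probability Omega R) (X : Ix -> Omega -> R)
  (hXm : forall k, measurable_fun setT (X k))
  (hXlaw : forall k, has_law P (X k) mu)
  (hXind : mutually_independent P X).

Let N := #|Ix|.
Definition pos (k : Ix) : nat := index k (enum Ix).
Definition Xn (i : nat) : Omega -> R := X (nth k0 (enum Ix) i).
Fixpoint Yf (n : nat) (v : nat -> R) : T R n :=
  match n return T R n with 0 => (0:R) | S n => (Yf n v, v n) end.
Definition Y n (w : Omega) := Yf n (fun i => Xn i w).
Definition Rest n (B : nat -> set R) : set Omega :=
  [set w | forall i, (n <= i)%N -> (i < N)%N -> B i (Xn i w)].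

Lemma pos_lt k : (pos k < N)%N.
Proof. by rewrite /pos /N cardE index_mem mem_enum. Qed.
Lemma nth_pos k : nth k0 (enum Ix) (pos k) = k.
Proof. by rewrite /pos nth_index // mem_enum. Qed.
Lemma pos_nth i : (i < N)%N -> pos (nth k0 (enum Ix) i) = i.
Proof. by move=> iN; rewrite /pos index_uniq // ?enum_uniq // -cardE. Qed.

Lemma mXn i B : measurable B -> measurable (Xn i @^-1` B).
Proof. by move=> mB; rewrite -[X in measurable X]setTI; exact: hXm. Qed.

Lemma measurable_Rest n B : (forall i, measurable (B i)) -> measurable (Rest n B).
Proof.
move=> mB.
have -> : Rest n B = \bigcap_i (if (n <= i < N)%N then Xn i @^-1` B i else setT).
  apply/seteqP; split => w /=.
    by move=> H i _; case: ifP => // /andP[? ?]; exact: H.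
  by move=> H i ni iN; have := H i Logic.I; rewrite ni iN.
apply: bigcapT_measurable => i; case: ifP => // _; exact: mXn.
Qed.

Lemma P_inter (s : nat -> bool) (B : nat -> set R) : (forall i, measurable (B i)) ->
  P [set w | forall i, s i -> (i < N)%N -> B i (Xn i w)] =
  (\prod_(k : Ix) (if s (pos k) then mu (B (pos k)) else 1))%E.
Proof.
move=> mB; pose B' k := if s (pos k) then B (pos k) else setT.
have mB' k : measurable (B' k) by rewrite /B'; case: ifP.
have -> : [set w | forall i, s i -> (i < N)%N -> B i (Xn i w)] =
    \bigcap_(k in [set: Ix]) (X k @^-1` B' k).
  apply/seteqP; split => w /=.
    move=> H k _; rewrite /B'; case: ifP => // sk.
    by have := H (pos k) sk (pos_lt k); rewrite /Xn nth_pos.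
  move=> H i si iN; have := H (nth k0 (enum Ix) i) Logic.I.
  by rewrite /B' pos_nth // si.
rewrite hXind //; apply: eq_bigr => k _; rewrite /B'; case: ifP => _.
  exact: hXlaw.
by rewrite preimage_setT probability_setT.
Qed.

Definition upd (B : nat -> set R) n B0 := fun i => if i == n then B0 else B i.

Lemma Rest_split n B0 B : (n < N)%N ->
  Xn n @^-1` B0 `&` Rest n.+1 B = Rest n (upd B n B0).
Proof.
move=> nN; apply/seteqP; split => w /=.
  move=> [H0 H] i ni iN; rewrite /upd; case: eqP => [->//|/eqP ne].
  by apply: H => //; rewrite ltn_neqAle eq_sym ne.
move=> H; split; first by have := H n (leqnn n) nN; rewrite /upd eqxx.
move=> i ni iN; have := H i (ltnW ni) iN; rewrite /upd; case: eqP => // ein.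
by move: ni; rewrite ein ltnn.
Qed.

Lemma indep_step n B0 B : (forall i, measurable (B i)) -> measurable B0 ->
  (n < N)%N -> P (Xn n @^-1` B0 `&` Rest n.+1 B) = (mu B0 * P (Rest n.+1 B))%E.
Proof.
move=> mB mB0 nN; rewrite Rest_split //.
have mB1 : forall i, measurable (upd B n B0 i) by move=> i; rewrite /upd; case: ifP.
rewrite /Rest (P_inter (fun i => n <= i)%N) // (P_inter (fun i => n < i)%N) //.
pose kn := nth k0 (enum Ix) n.
rewrite [in LHS](bigD1 kn) // [in RHS](bigD1 kn) //= /kn pos_nth // leqnn ltnn /upd eqxx mul1e.
congr (_ * _)%E; apply: eq_bigr => k kkn.
have kkn' : k != kn by [].
have pn : pos k != n.
  by apply: contra kkn => /eqP <-; rewrite nth_pos.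
by rewrite leq_eqVlt eq_sym (negbTE pn).
Qed.

Section PF.
Context d' (T' : measurableType d') (Z : Omega -> T') (D : set Omega).
Definition pf (mZ : measurable_fun setT Z) (mD : measurable D) (E : set T') :=
  P (Z @^-1` E `&` D).
Variables (mZ : measurable_fun setT Z) (mD : measurable D).
Let pf0 : pf mZ mD set0 = 0%E.
Proof. by rewrite /pf preimage_set0 set0I measure0. Qed.
Let pf_ge0 E : (0 <= pf mZ mD E)%E.
Proof. exact: measure_ge0. Qed.
Let pf_sa : semi_sigma_additive (pf mZ mD).
Proof.
move=> F mF tF mUF; rewrite /pf preimage_bigcup setI_bigcupl.
apply: measure_semi_sigma_additive.
- move=> n; apply: measurableI => //; rewrite -[X in measurable X]setTI; exact: mZ.
- apply/trivIsetP => /= i j _ _ ij; rewrite setIACA -preimage_setI.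
  by move/trivIsetP : tF => /(_ _ _ _ _ ij) ->//; rewrite preimage_set0 set0I.
- rewrite -setI_bigcupl; apply: measurableI => //.
  by rewrite -preimage_bigcup -[X in measurable X]setTI; exact: mZ.
Qed.
HB.instance Definition _ := isMeasure.Build _ _ _ (pf mZ mD) pf0 pf_ge0 pf_sa.
End PF.

Lemma mY n : measurable_fun setT (Y n).
Proof.
elim: n => [|n IH]; first exact: measurable_cst.
exact: measurable_fun_pair IH (hXm _).
Qed.

Lemma joint n : (n <= N)%N -> forall B, (forall i, measurable (B i)) ->
  forall A, measurable A ->
  P (Y n @^-1` A `&` Rest n B) = (lam R mu n A * P (Rest n B))%E.
Proof.
elim: n => [_ B mB A mA|n IH nN B mB E mE].
  rewrite /= diracE; have [A0|A0] := boolP ((0:R) \in A).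
    have -> : Y 0 @^-1` A = setT.
      by apply/seteqP; split => // w _; move: A0; rewrite inE.
    by rewrite setTI mul1e.
  have -> : Y 0 @^-1` A = set0.
    by apply/seteqP; split => // w /= Aw; move: A0; rewrite mem_set.
  by rewrite set0I measure0 mul0e.
have Dm := @measurable_Rest n.+1 B mB.
have hc0 : (0 <= fine (P (Rest n.+1 B)))%R by apply: fine_ge0; exact: measure_ge0.
have hcE : (fine (P (Rest n.+1 B)))%:E = P (Rest n.+1 B).
  by rewrite fineK // fin_num_measure.
pose m1 := @pf _ _ _ _ (mY n.+1) Dm.
pose m2 := mscale (NngNum hc0) (lam R mu n.+1).
pose G := [set A `*` B | A in @measurable _ (T R n) & B in @measurable _ R].
have mG : @measurable _ (T R n.+1) = <<s G >>.
  exact: (@measurable_prod_measurableType _ _ (T R n) R).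
have GI : setI_closed G.
  move=> _ _ [A1 mA1 [B1 mB1 <-]] [A2 mA2 [B2 mB2 <-]].
  exists (A1 `&` A2); first exact: measurableI.
  by exists (B1 `&` B2); [exact: measurableI|rewrite setXI].
have GT : forall k : nat, G setT.
  by move=> _; exists setT => //; exists setT => //; rewrite setXTT.
have cov : \bigcup_(k : nat) (setT : set (T R n.+1)) = setT.
  by apply/seteqP; split => // x _; exists 0%N.
have m12 : forall A, G A -> m1 A = m2 A.
  move=> _ [A1 mA1 [B0 mB0 <-]].
  rewrite /m1 /m2 /pf /mscale /=.
  have -> : Y n.+1 @^-1` (A1 `*` B0) = Y n @^-1` A1 `&` Xn n @^-1` B0 by [].
  have mB1 : forall i, measurable (upd B n B0 i).
    by move=> i; rewrite /upd; case: ifP.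
  rewrite -setIA Rest_split // (IH (ltnW nN) _ mB1) //.
  rewrite -Rest_split // indep_step // product_measure1E // hcE.
  by rewrite [RHS]muleC -muleA.
have m1oo : forall k : nat, (m1 setT < +oo)%E.
  move=> _; apply: (le_lt_trans (probability_le1 P _)); last exact: ltry.
  by apply: measurableI => //; rewrite -[X in measurable X]setTI; exact: mY.
have := @measure_unique _ R (T R n.+1) G (fun _ => setT) mG GI GT cov m1 m2 m12 m1oo E mE.
move=> h; rewrite [LHS](_ : _ = m2 E); last exact: h.
rewrite /m2 /= /mscale /=.
by rewrite hcE muleC.
Qed.

End Prob.

Section Poly.
Context (R : realType) (mu : probability R R).
Hypothesis mu_set1 : forall a : R, mu [set a] = 0%E.

Fixpoint Cls (n : nat) : (T R n -> R) -> Prop :=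
  match n return (T R n -> R) -> Prop with
  | 0 => fun F => exists c, forall y, F y = c
  | S n => fun F => exists (J : finType) (c : J -> T R n -> R) (e : J -> nat),
      (forall j, Cls n (c j)) /\ forall y t, F (y, t) = \sum_(j : J) c j y * t ^+ e j
  end.

Lemma Cls_ext n F G : (forall y, F y = G y) -> Cls n F -> Cls n G.
Proof.
case: n F G => [|n] F G FG.
  by move=> [c Fc]; exists c => y; rewrite -FG.
move=> [J [c [e [hc hF]]]]; exists J, c, e; split => // y t.
by rewrite -FG hF.
Qed.

Lemma Cls_const n a : Cls n (fun _ => a).
Proof.
elim: n a => [|n IH] a; first by exists a.
exists 'I_1, (fun _ _ => a), (fun _ => 0%N); split => // y t.
by rewrite big_ord1 expr0 mulr1.
Qed.

Lemma Cls_add n F G : Cls n F -> Cls n G -> Cls n (fun y => F y + G y).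
Proof.
case: n F G => [|n] F G.
  by move=> [a Fa] [b Gb]; exists (a + b) => y; rewrite Fa Gb.
move=> [J1 [c1 [e1 [hc1 hF]]]] [J2 [c2 [e2 [hc2 hG]]]].
exists (J1 + J2)%type,
  (fun j => match j with inl a => c1 a | inr b => c2 b end),
  (fun j => match j with inl a => e1 a | inr b => e2 b end); split.
  by case.
by move=> y t; rewrite big_sumType hF hG.
Qed.

Lemma Cls_mul n F G : Cls n F -> Cls n G -> Cls n (fun y => F y * G y).
Proof.
elim: n F G => [|n IH] F G.
  by move=> [a Fa] [b Gb]; exists (a * b) => y; rewrite Fa Gb.
move=> [J1 [c1 [e1 [hc1 hF]]]] [J2 [c2 [e2 [hc2 hG]]]].
exists (J1 * J2)%type,
  (fun j => fun y => c1 j.1 y * c2 j.2 y), (fun j => (e1 j.1 + e2 j.2)%N); split.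
  move=> [a b] /=; apply: IH; [exact: hc1|exact: hc2].
move=> y t; rewrite hF hG big_distrlr pair_big /=; apply: eq_bigr => -[a b] _ /=.
by rewrite exprD mulrACA.
Qed.

Lemma Cls_sum n (J : finType) (F : J -> T R n -> R) :
  (forall j, Cls n (F j)) -> Cls n (fun y => \sum_(j : J) F j y).
Proof.
move=> hF; rewrite unlock /reducebig.
elim: (index_enum J) => [|a s IH] /=; first exact: Cls_const.
exact: Cls_add.
Qed.

Lemma Cls_prod n (J : finType) (F : J -> T R n -> R) :
  (forall j, Cls n (F j)) -> Cls n (fun y => \prod_(j : J) F j y).
Proof.
move=> hF; rewrite unlock /reducebig.
elim: (index_enum J) => [|a s IH] /=; first exact: Cls_const.
exact: Cls_mul.
Qed.

Fixpoint coord (n i : nat) : T R n -> R :=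
  match n return T R n -> R with
  | 0 => fun _ => 0
  | S n => fun y => if i == n then y.2 else coord n i y.1
  end.

Lemma Cls_coord n i : Cls n (coord n i).
Proof.
elim: n => [|n IH]; first by exists 0.
case: (eqVneq i n) => [->|ne].
  exists 'I_1, (fun _ _ => 1), (fun _ => 1%N); split.
    by move=> _; exact: Cls_const.
  by move=> y t; rewrite big_ord1 mul1r expr1 /= eqxx.
exists 'I_1, (fun _ => coord n i), (fun _ => 0%N); split.
  by [].
by move=> y t; rewrite big_ord1 expr0 mulr1 /= (negbTE ne).
Qed.

Lemma Cls_meas n F : Cls n F -> measurable_fun setT F.
Proof.
elim: n F => [|n IH] F.
  move=> [c Fc]; have -> : F = fun _ => c by apply/funext.
  exact: measurable_cst.
move=> [J [c [e [hc hF]]]].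
have -> : F = (fun p : T R n * R => \sum_(j : J) c j p.1 * p.2 ^+ e j).
  by apply/funext => -[y t]; exact: hF.
apply: measurable_sum => j; apply: measurable_realfun.measurable_funM.
  exact: measurableT_comp (IH _ (hc j)) measurable_fst.
exact: measurable_realfun.measurable_funX measurable_snd.
Qed.

Lemma Cls_mset n F : Cls n F -> measurable [set y | F y = 0].
Proof.
move=> /Cls_meas mF; have := mF measurableT _ (measurable_set1 0).
by rewrite setTI.
Qed.

Lemma measurable_roots (p : {poly R}) : measurable [set t | p.[t] = 0].
Proof.
have mp : measurable_fun setT (fun t : R => p.[t]).
  have -> : (fun t : R => p.[t]) = (fun t => \sum_(i < size p) p`_i * t ^+ i).
    by apply/funext => t; rewrite horner_coef.
  apply: measurable_sum => i; apply: measurable_realfun.measurable_funM; first exact: measurable_cst.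
  exact: measurable_realfun.measurable_funX.
have := mp measurableT _ (measurable_set1 0).
by rewrite setTI.
Qed.

Lemma mu_roots (p : {poly R}) : p != 0 -> mu [set t | p.[t] = 0] = 0%E.
Proof.
move: {2}(size p) (leqnn (size p)) => m; elim: m p => [|m IH] p hs p0.
  by move: p0; rewrite -size_poly_eq0 -leqn0 hs.
case: (pselect (exists a, p.[a] = 0)) => [[a pa]|nr]; last first.
  have -> : [set t | p.[t] = 0] = set0.
    by apply/seteqP; split => // t /= pt; apply: nr; exists t.
  exact: measure0.
have /factor_theorem [q pq] : root p a by apply/rootP.
have q0 : q != 0 by apply: contra p0 => /eqP q0; rewrite pq q0 mul0r.
have sq : (size q <= m)%N.
  move: hs; rewrite pq size_mul ?polyXsubC_eq0 // size_XsubC addn2 /=.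
  by [].
apply/eqP; rewrite eq_le measure_ge0 andbT.
apply: (@le_trans _ _ (mu ([set a] `|` [set t | q.[t] = 0]))).
  apply: le_measure; rewrite ?inE //.
  - exact: measurable_roots.
  - by apply: measurableU; [exact: measurable_set1|exact: measurable_roots].
  - move=> t /=; rewrite pq hornerM hornerXsubC => /eqP; rewrite mulf_eq0.
    by case/orP => /eqP h; [right|left; apply/eqP; rewrite -subr_eq0 h].
apply: (le_trans (measureU2 _ _ _)).
- exact: measurable_set1.
- exact: measurable_roots.
have H0 : forall x y : \bar R, x = 0%E -> y = 0%E -> (x + y <= 0)%E.
  by move=> x y -> ->; rewrite adde0.
by apply: H0; [exact: mu_set1|exact: IH].
Qed.

Lemma Cls_zero n F : Cls n F -> (exists y, F y != 0) ->
  lam R mu n [set y | F y = 0] = 0%E.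
Proof.
elim: n F => [|n IH] F.
  move=> [c Fc] [y Fy]; have -> : [set y | F y = 0] = set0.
    apply/seteqP; split => // z /= Fz; move: Fy; rewrite Fc -(Fc z) Fz eqxx.
    by [].
  exact: measure0.
move=> hF0; have mS := @Cls_mset n.+1 F hF0; move: hF0.
move=> [J [c [e [hc hF]]]] [[y0 t0] Fy0].
pose Py y := \sum_(j : J) c j y *: 'X^(e j) : {poly R}.
have PyE y t : (Py y).[t] = F (y, t).
  by rewrite hF horner_sum; apply: eq_bigr => j _; rewrite hornerZ hornerXn.
have Py0 : Py y0 != 0.
  by apply: contra Fy0 => /eqP h; rewrite -PyE h horner0.
pose k := (size (Py y0)).-1.
pose C y := \sum_(j : J) c j y * (e j == k)%:R.
have CE y : (Py y)`_k = C y.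
  by rewrite coef_sum; apply: eq_bigr => j _; rewrite coefZ coefXn eq_sym.
have CC : Cls n C.
  by apply: Cls_sum => j; exact: (Cls_mul _ _ _ (hc j) (Cls_const _ _)).
have C0 : C y0 != 0 by rewrite -CE -lead_coefE lead_coef_eq0.
have nullC : lam R mu n [set y | C y = 0] = 0%E by apply: IH => //; exists y0.
have mC := @Cls_mset n C CC.
rewrite /= /product_measure1.
apply/eqP; rewrite eq_le; apply/andP; split; last first.
  by apply: integral_ge0 => y _; exact: measure_ge0.
have H : (\int[lam R mu n]_(y in setT) (mu \o xsection [set y | F y = 0%R]) y <=
    \int[lam R mu n]_(y in setT) (\1_[set y | C y = 0%R] y)%:E)%E.
  apply: ge0_le_integral => //.
  - by apply: measurable_fun_xsection.
  - apply/measurable_realfun.measurable_EFinP; exact: measurable_realfun.measurable_indic.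
  move=> y _ /=; rewrite indicE; have [yC|yC] := boolP (y \in [set y | C y = 0]).
    by rewrite /= probability_le1 //; exact: measurable_xsection.
  rewrite /=; have -> : xsection [set y | F y = 0] y = [set t | (Py y).[t] = 0].
    by apply/seteqP; split => t; rewrite /xsection /= inE PyE.
  rewrite mu_roots //; apply: contra yC => /eqP h.
  by rewrite inE /= -CE h coef0.
apply: (le_trans H).
rewrite integral_indic // setIT le_eqVlt; apply/orP; left; apply/eqP; exact: nullC.
Qed.

End Poly.
Section Det.
Context (R : realType).

Definition Mx K p q (rho : 'I_K -> 'I_p * 'I_q) (U : 'M[R]_(p,K)) (V : 'M[R]_(K,q))
  : 'M[R]_K := \matrix_(k, c) (U (rho c).1 k * V k (rho c).2).
Arguments Mx {K p q}.

Lemma Mx_surj K p q (rho : 'I_K -> 'I_p * 'I_q) (rho' : 'I_p * 'I_q -> 'I_K)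
  (rhoK : forall x, rho (rho' x) = x) U V :
  \det (Mx rho U V) != 0 ->
  forall B : 'M[R]_(p,q), exists g : 'rV[R]_K, U *m diag_mx g *m V = B.
Proof.
move=> hdet B.
have hu : Mx rho U V \in unitmx by rewrite unitmxE unitfE.
pose bv : 'rV[R]_K := \row_c B (rho c).1 (rho c).2.
exists (bv *m invmx (Mx rho U V)).
set g := bv *m _.
have gM : g *m Mx rho U V = bv by rewrite /g mulmxKV.
apply/matrixP => i j.
have := congr1 (fun A : 'rV[R]_K => A 0 (rho' (i, j))) gM.
rewrite /bv [in RHS]mxE rhoK /= => <-.
rewrite mul_mx_diag !mxE; apply: eq_bigr => k _; rewrite !mxE rhoK /=.
by rewrite mulrCA mulrA.
Qed.

Lemma layer_aff m n (M : 'M[R]_(m,n)) (K : R) : 0 <= K ->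
  exists b : 'cV[R]_m, exists K', 0 <= K' /\ forall x : 'cV[R]_n,
    (forall j, `|x j 0| <= K) ->
    relu_vec (M *m x + b) = M *m x + b /\ (forall i, `|(M *m x + b) i 0| <= K').
Proof.
move=> K0.
pose bb i := K * \sum_j `|M i j|.
have bb0 i : 0 <= bb i by rewrite mulr_ge0 // sumr_ge0.
exists (\col_i bb i), (2 * \sum_i bb i); split; first by rewrite mulr_ge0 // sumr_ge0.
move=> x hx.
have hM i : `|(M *m x) i 0| <= bb i.
  rewrite mxE (le_trans (ler_norm_sum _ _ _)) // /bb mulr_sumr; apply: ler_sum => j _.
  by rewrite normrM mulrC ler_wpM2r.
have hv i : (M *m x + \col_i bb i) i 0 = (M *m x) i 0 + bb i.
  by rewrite [LHS]mxE [X in _ + X]mxE.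
have hpre i : 0 <= (M *m x + \col_i bb i) i 0 /\ (M *m x + \col_i bb i) i 0 <= 2 * bb i.
  rewrite hv; move: (hM i); move: ((M *m x) i 0) => v; rewrite ler_norml => /andP[h1 h2].
  by split; lra.
split.
  apply/matrixP => i j; rewrite (ord1 j) mxE; apply: max_l.
  by have [] := hpre i.
move=> i; have [p1 p2] := hpre i; rewrite ger0_norm //; apply: (le_trans p2).
rewrite ler_pM2l ?ltr0n //. 
by rewrite (bigD1 i) //= lerDl sumr_ge0.
Qed.

Lemma sqnorm_bound n (x : 'cV[R]_n) j : sqnorm x <= 1 -> `|x j 0| <= 1.
Proof.
move=> hx; have h : x j 0 ^+ 2 <= 1.
  apply: le_trans hx; rewrite /sqnorm (bigD1 j) //= lerDl sumr_ge0 // => i _.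
  exact: sqr_ge0.
rewrite ler_norml; apply/andP; split; nra.
Qed.

Lemma net_ok d r (W1 : 'M[R]_(d * r, d)) (W2 : 'M[R]_(r, d * r))
  (W3 : 'M[R]_(d * r, r)) (W4 : 'M[R]_(d, d * r))
  (gstar : 'rV[R]_d) (Wstar : 'M[R]_d) (bstar : 'cV[R]_d)
  (g1 g3 : 'rV[R]_(d * r)) (A : 'M[R]_(d, r)) (Bm : 'M[R]_(r, d)) :
  W2 *m diag_mx g1 *m W1 = Bm -> W4 *m diag_mx g3 *m W3 = A ->
  A *m Bm = diag_mx gstar *m Wstar ->
  exists (g1 : 'rV[R]_(d * r)) (g2 : 'rV[R]_r) (g3 : 'rV[R]_(d * r))
         (g4 : 'rV[R]_d)
         (b1 : 'cV[R]_(d * r)) (b2 : 'cV[R]_r) (b3 : 'cV[R]_(d * r))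
         (b4 : 'cV[R]_d),
    forall x : 'cV[R]_d, sqnorm x <= 1 ->
      nlayer g4 W4 b4 (nlayer g3 W3 b3 (nlayer g2 W2 b2 (nlayer g1 W1 b1 x)))
      = nlayer gstar Wstar bstar x.
Proof.
move=> hB hA hAB.
have [b1 [K1 [K10 h1]]] := @layer_aff _ _ (diag_mx g1 *m W1) _ ler01.
have [b2 [K2 [K20 h2]]] := @layer_aff _ _ (diag_mx (const_mx 1) *m W2) _ K10.
have [b3 [K3 [K30 h3]]] := @layer_aff _ _ (diag_mx g3 *m W3) _ K20.
pose M1 := diag_mx g1 *m W1; pose M2 := diag_mx (const_mx 1) *m W2.
pose M3 := diag_mx g3 *m W3; pose M4 := diag_mx (const_mx 1) *m W4.
pose c := M4 *m (M3 *m (M2 *m b1 + b2) + b3).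
exists g1, (const_mx 1), g3, (const_mx 1), b1, b2, b3, (bstar - c).
move=> x hx.
have hx' : forall j, `|x j 0| <= 1 by move=> j; exact: sqnorm_bound.
rewrite /nlayer.
have [e1 k1] := h1 x hx'; rewrite e1.
have [e2 k2] := h2 _ k1; rewrite e2.
have [e3 k3] := h3 _ k2; rewrite e3.
congr relu_vec.
have hP : M4 *m M3 *m M2 *m M1 = diag_mx gstar *m Wstar.
  rewrite /M4 /M3 /M2 /M1 !diag_const_mx !mul_scalar_mx !scale1r -hAB -hA -hB.
  by rewrite !mulmxA.
have hexp : M4 *m (M3 *m (M2 *m (M1 *m x + b1) + b2) + b3) =
    M4 *m M3 *m M2 *m M1 *m x + c.
  by rewrite /c !mulmxDr !mulmxA !addrA.
rewrite hexp hP -addrA; congr (_ + _).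
by rewrite addrC subrK.
Qed.

End Det.
Arguments Mx {R K p q}.

Lemma coord_Yf (R : realType) n v i : (i < n)%N -> coord R n i (Yf R n v) = v i.
Proof.
elim: n => [//|n IH] hi /=.
case: eqP => [->//|/eqP ne]; apply: IH.
by move: hi; rewrite ltnS leq_eqVlt (negbTE ne).
Qed.

Lemma Cls_det (R : realType) n K (A : T R n -> 'M[R]_K) :
  (forall i j, Cls R n (fun y => A y i j)) -> Cls R n (fun y => \det (A y)).
Proof.
move=> hA.
have -> : (fun y => \det (A y)) =
    (fun y => \sum_(s : 'S_K) (-1) ^+ s * \prod_i A y i (s i)).
  by apply/funext => y; rewrite /determinant.
apply: Cls_sum => s.
apply: (Cls_mul R n _ _ (Cls_const R n _)).
exact: Cls_prod.
Qed.

Theorem mainTheorem2 (R : realType) (d r : nat) (hd : (2 <= d)%N)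
  (hr1 : (1 <= r)%N) (hrd : (r < d)%N)
  (gstar : 'rV[R]_d) (Wstar : 'M[R]_d) (bstar : 'cV[R]_d)
  (hrank : \rank Wstar = r)
  (dm : measure_display) (Omega : measurableType dm) (P : probability Omega R)
  (mu : probability R R) (hmu : continuous_bounded_law mu)
  (X : entry_idx d r -> Omega -> R)
  (hXm : forall k, measurable_fun setT (X k))
  (hXlaw : forall k, has_law P (X k) mu)
  (hXind : mutually_independent P X) :
  {ae P, forall w : Omega,
    exists (g1 : 'rV[R]_(d * r)) (g2 : 'rV[R]_r) (g3 : 'rV[R]_(d * r))
           (g4 : 'rV[R]_d)
           (b1 : 'cV[R]_(d * r)) (b2 : 'cV[R]_r) (b3 : 'cV[R]_(d * r))
           (b4 : 'cV[R]_d),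
    forall x : 'cV[R]_d, sqnorm x <= 1 ->
      nlayer g4 (W4_of X w) b4
        (nlayer g3 (W3_of X w) b3
          (nlayer g2 (W2_of X w) b2
            (nlayer g1 (W1_of X w) b1 x)))
      = nlayer gstar Wstar bstar x}.
Proof.
have d0 : (0 < d)%N by apply: leq_trans hd.
have dr0 : (0 < d * r)%N by rewrite muln_gt0 d0 hr1.
pose Ix := entry_idx d r.
pose k0 : Ix := inl (inl (Ordinal dr0, Ordinal d0)).
have mu_set1 : forall a : R, mu [set a] = 0%E.
  move=> a; have hl : null_set (@lebesgue_measure R) [set a].
    move=> A mA Aa; apply/eqP; rewrite eq_le measure_ge0 andbT -(lebesgue_measure_set1 a).
    by apply: le_measure; rewrite ?inE //; exact: measurable_set1.
  exact: (hmu.1 _ hl [set a] (measurable_set1 a) (@subset_refl _ _)).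
pose sig (c : 'I_(d * r)) : 'I_d * 'I_r := enum_val (cast_ord (esym (mxvec_cast d r)) c).
pose sig' (p : 'I_d * 'I_r) : 'I_(d * r) := cast_ord (mxvec_cast d r) (enum_rank p).
have sigK p : sig (sig' p) = p by rewrite /sig /sig' cast_ordK enum_rankK.
have sig_inj : injective sig by move=> a b /enum_val_inj /cast_ord_inj.
pose rho1 (c : 'I_(d * r)) : 'I_r * 'I_d := ((sig c).2, (sig c).1).
pose rho1' (p : 'I_r * 'I_d) : 'I_(d * r) := sig' (p.2, p.1).
have rho1K p : rho1 (rho1' p) = p by case: p => a b; rewrite /rho1 /rho1' sigK.
pose N := #|Ix|.
pose ent (k : Ix) (y : T R N) : R := coord R N (pos Ix k) y.
pose W1y y : 'M[R]_(d * r, d) := \matrix_(i, j) ent (inl (inl (i, j))) y.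
pose W2y y : 'M[R]_(r, d * r) := \matrix_(i, j) ent (inl (inr (i, j))) y.
pose W3y y : 'M[R]_(d * r, r) := \matrix_(i, j) ent (inr (inl (i, j))) y.
pose W4y y : 'M[R]_(d, d * r) := \matrix_(i, j) ent (inr (inr (i, j))) y.
pose D1 y := \det (Mx rho1 (W2y y) (W1y y)).
pose D2 y := \det (Mx sig (W4y y) (W3y y)).
have Cent k : Cls R N (ent k) by exact: Cls_coord.
have CD1 : Cls R N D1.
  apply: Cls_det => i j.
  apply: (Cls_ext R N (fun y => ent (inl (inr ((rho1 j).1, i))) y *
                                 ent (inl (inl (i, (rho1 j).2))) y)).
    by move=> y; rewrite !mxE.
  exact: Cls_mul.
have CD2 : Cls R N D2.
  apply: Cls_det => i j.
  apply: (Cls_ext R N (fun y => ent (inr (inr ((sig j).1, i))) y *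
                                 ent (inr (inl (i, (sig j).2))) y)).
    by move=> y; rewrite !mxE.
  exact: Cls_mul.
pose aw (k : Ix) : R := match k with
  | inl (inl (i, j)) => ((sig i).1 == j)%:R
  | inl (inr (i, k)) => ((sig k).2 == i)%:R
  | inr (inl (k, j)) => ((sig k).2 == j)%:R
  | inr (inr (i, k)) => ((sig k).1 == i)%:R end.
pose yw := Yf R N (fun i => aw (nth k0 (enum Ix) i)).
have entw k : ent k yw = aw k.
  by rewrite /ent coord_Yf ?nth_pos // pos_lt.
have signe k c : k != c -> ((sig k).1 != (sig c).1) || ((sig k).2 != (sig c).2).
  move=> kc; have : sig k != sig c by apply: contra kc => /eqP /sig_inj ->.
  by case: (sig k) (sig c) => [a1 a2] [b1 b2]; rewrite xpair_eqE negb_and.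
have M1w : Mx rho1 (W2y yw) (W1y yw) = 1%:M.
  apply/matrixP => k c; rewrite !mxE !entw /=.
  case: (eqVneq k c) => [->|kc]; first by rewrite !eqxx mulr1.
  case/orP: (signe k c kc) => /negbTE ->.
    by rewrite mulr0.
  by rewrite mul0r.
have M2w : Mx sig (W4y yw) (W3y yw) = 1%:M.
  apply/matrixP => k c; rewrite !mxE !entw /=.
  case: (eqVneq k c) => [->|kc]; first by rewrite !eqxx mulr1.
  case/orP: (signe k c kc) => /negbTE ->.
    by rewrite mul0r.
  by rewrite mulr0.
have z1 : lam R mu N [set y | D1 y = 0] = 0%E.
  apply: Cls_zero => //; exists yw; by rewrite /D1 M1w det1 oner_neq0.
have z2 : lam R mu N [set y | D2 y = 0] = 0%E.
  apply: Cls_zero => //; exists yw; by rewrite /D2 M2w det1 oner_neq0.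
pose Z := [set y | D1 y = 0] `|` [set y | D2 y = 0].
have mZ : measurable Z by apply: measurableU; exact: Cls_mset.
have lamZ : lam R mu N Z = 0%E.
  apply/eqP; rewrite eq_le measure_ge0 andbT.
  apply: (le_trans (measureU2 _ _ _)); [exact: Cls_mset|exact: Cls_mset|].
  have H0 : forall x y : \bar R, x = 0%E -> y = 0%E -> (x + y <= 0)%E.
    by move=> x y -> ->; rewrite adde0.
  by apply: H0; [exact: z1|exact: z2].
rewrite /prop_near1 /nbhs /= /almost_everywhere.
pose Yw := Y R Ix k0 dm Omega X N.
have [C [Bm hCB]] : exists (C : 'M[R]_(d, r)) (Bm : 'M[R]_(r, d)), C *m Bm = Wstar.
  have := mulmx_base Wstar; move: (col_base Wstar) (row_base Wstar).
  by rewrite hrank => C0 B0 e; exists C0, B0.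
exists (Yw @^-1` Z); split.
- by have := mY R Ix k0 dm Omega X hXm N measurableT _ mZ; rewrite setTI.
- have := joint R mu Ix k0 dm Omega P X hXm hXlaw hXind N (leqnn N)
    (fun _ => setT) (fun _ => measurableT) Z mZ.
  have -> : Rest R Ix k0 dm Omega X N (fun _ => setT) = setT.
    by apply/seteqP; split => // w _ i h1 h2; move: (leq_trans h1 h2); rewrite ltnn.
  rewrite setIT probability_setT mule1 => ->.
  exact: lamZ.
move=> w /= nQ.
have entY k : ent k (Yw w) = X k w.
  by rewrite /ent /Yw /Y coord_Yf ?pos_lt // /Xn nth_pos.
have W1eq : W1y (Yw w) = W1_of X w by apply/matrixP => i j; rewrite !mxE entY.
have W2eq : W2y (Yw w) = W2_of X w by apply/matrixP => i j; rewrite !mxE entY.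
have W3eq : W3y (Yw w) = W3_of X w by apply/matrixP => i j; rewrite !mxE entY.
have W4eq : W4y (Yw w) = W4_of X w by apply/matrixP => i j; rewrite !mxE entY.
rewrite /Z /=.
case: (eqVneq (D1 (Yw w)) 0) => [h|h1]; first by left.
case: (eqVneq (D2 (Yw w)) 0) => [h|h2]; first by right.
exfalso; apply: nQ.
rewrite /D1 W1eq W2eq in h1; rewrite /D2 W3eq W4eq in h2.
have [g1 hg1] := @Mx_surj R _ _ _ rho1 rho1' rho1K _ _ h1 Bm.
have [g3 hg3] := @Mx_surj R _ _ _ sig sig' sigK _ _ h2 (diag_mx gstar *m C).
apply: (@net_ok R d r _ _ _ _ gstar Wstar bstar g1 g3 _ _ hg1 hg3).
by rewrite -mulmxA hCB.
Qed.
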